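(* Let $h>0$ and $f\in H^\omega(X)\cap L_1(X)$. Then \[ \|f\|_{\mathcal B(X)}\le\frac{\|f\|_{H^\omega(X)}}{\mu(B_h)}\int_{B_h}\omega(\rho(u,\theta))\,d\mu(u)+\frac{\|f\|_{L_1(X)}}{\mu(B_h)}. \] The inequality is sharp: it becomes an equality for $f_{e,h}(x)=(\omega(h)-\omega(\rho(x,\theta)))_+$.
   Context: Standing setting: $(X,\rho)$ is a metric space with a Borel measure $\mu$. $X$ is a commutative monoid, i.e. there is an associative and commutative binary operation $+$ on $X$ with a neutral element $\theta$. The measure is translation invariant: $\mu(x+Q)=\mu(Q)$ for every $\mu$-measurable $Q\subset X$ and every $x\in X$; correspondingly $\int_{B_h}g(x+u)\,d\mu(u)=\int_{x+B_h}g(u)\,d\mu(u)$ for locally integrable $g$. Moreover $\rho(x+y,x)\le\rho(y,\theta)$ for all $x,y\in X$. $B_h$ denotes the open ball of radius $h$ centered at $\theta$, and it is assumed that $0<\mu(B_h)<\infty$ and $B_h\neq\{\theta\}$ for every $h>0$. Every continuous real function on $X$ is integrable on every open ball. For a function $f$, $\|f\|_{\mathcal B(X)}=\sup_{x\in X}|f(x)|$; $L_1(X)$ is the space of $\mu$-integrable functions with the usual norm. $\alpha_+=\max\{\alpha,0\}$. A modulus of continuity is a function $\omega\colon[0,\infty)\to[0,\infty)$ that is non-decreasing, semi-additive ($\omega(s+t)\le\omega(s)+\omega(t)$), with $\omega(0)=0$, and not identically zero. $H^\omega(X)$ is the space of $f\colon X\to\mathbb R$ with $\|f\|_{H^\omega(X)}:=\sup_{x\neq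 y}\frac{|f(x)-f(y)|}{\omega(\rho(x,y))}<\infty$. *)

(* Defs.v *)
From HB Require Import structures.
From mathcomp Require Import all_boot all_order all_algebra.
From mathcomp Require Import all_classical all_reals all_analysis.
Set Implicit Arguments. Unset Strict Implicit. Unset Printing Implicit Defensive.
Import Order.TTheory GRing.Theory Num.Theory.
Local Open Scope classical_set_scope.
Local Open Scope ring_scope.

Section Defs.
Context {R : realType} {X : Type}.

Definition is_metric (rho : X -> X -> R) : Prop :=
  (forall x y, 0 <= rho x y) /\
  (forall x y, rho x y = 0 <-> x = y) /\
  (forall x y, rho x y = rho y x) /\
  (forall x y z, rho x z <= rho x y + rho y z).

Definition rball (rho : X -> X -> R) (x : X) (r : R) : set X :=
  [set y | rho x y < r].

Definition rho_open (rho : X -> X -> R) (A : set X) : Prop :=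
  forall x, A x -> exists2 e : R, 0 < e & rball rho x e `<=` A.

Definition rho_continuous (rho : X -> X -> R) (g : X -> R) : Prop :=
  forall x (e : R), 0 < e -> exists2 d : R, 0 < d &
    forall y, rho x y < d -> `|g x - g y| < e.

Definition is_comm_monoid (add : X -> X -> X) (theta : X) : Prop :=
  (forall x y z, add x (add y z) = add (add x y) z) /\
  (forall x y, add x y = add y x) /\
  (forall x, add theta x = x).

Definition translate (add : X -> X -> X) (x : X) (Q : set X) : set X :=
  [set add x u | u in Q].

Definition is_modulus (omega : R -> R) : Prop :=
  omega 0 = 0 /\
  (forall t, 0 <= t -> 0 <= omega t) /\
  (forall s t, 0 <= s -> s <= t -> omega s <= omega t) /\
  (forall s t, 0 <= s -> 0 <= t -> omega (s + t) <= omega s + omega t) /\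
  (exists2 t, 0 <= t & omega t <> 0).

Definition Hnorm (rho : X -> X -> R) (omega : R -> R) (f : X -> R) : \bar R :=
  ereal_sup [set z : \bar R | exists x y, x <> y /\
      z = (`|f x - f y| / omega (rho x y))%:E].

Definition in_H (rho : X -> X -> R) (omega : R -> R) (f : X -> R) : Prop :=
  (Hnorm rho omega f < +oo)%E.

Definition supnorm (f : X -> R) : \bar R :=
  ereal_sup (range (fun x => (`|f x|)%:E)).

End Defs.

Definition L1norm {R : realType} {d : measure_display} {X : measurableType d}
  (mu : {measure set X -> \bar R}) (f : X -> R) : \bar R :=
  (\int[mu]_x (`|f x|)%:E)%E.

(* Main.v *)
Require Import Defs.
From HB Require Import structures.
From mathcomp Require Import all_boot all_order all_algebra.
From mathcomp Require Import all_classical all_reals all_analysis.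
Import Order.TTheory GRing.Theory Num.Theory.
Local Open Scope classical_set_scope.
Local Open Scope ring_scope.

From mathcomp Require Import ring lra.
From mathcomp Require Import measurable_realfun.

Section Aux.
Context (R : realType) (d : measure_display) (X : measurableType d)
  (rho : X -> X -> R) (Hmetric : is_metric rho)
  (Hborel : (@measurable d X) = <<s rho_open rho >>).

Lemma mball x r : measurable (rball rho x r).
Proof.
case: Hmetric => r0 [req [rsym rtri]].
rewrite Hborel; apply: sub_sigma_algebra => y /= Hy.
exists (r - rho x y); first by rewrite subr_gt0.
move=> z /= Hz; rewrite /rball /=.
by apply: (le_lt_trans (rtri x y z)); rewrite -ltrBrDl.
Qed.

Lemma mrho (D : set X) (th : X) : measurable D ->
  measurable_fun D (fun u => rho u th).
Proof.
case: Hmetric => r0 [req [rsym rtri]].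
move=> mD; apply: (measurability (@measurable_realfun.RGenInftyO.G R)) => [|/= _ [_] [r] -> <-].
  exact: measurable_realfun.RGenInftyO.measurableE.
apply: measurableI => //.
have -> : (fun u => rho u th) @^-1` `]-oo, r[ = rball rho th r.
  by apply/seteqP; split => u /=; rewrite in_itv/= rsym.
exact: mball.
Qed.

Lemma mcomp_mono (D : set X) (th : X) (om : R -> R) : measurable D ->
  (forall s t, 0 <= s -> s <= t -> om s <= om t) ->
  measurable_fun D (fun u => om (rho u th)).
Proof.
case: Hmetric => r0 [req [rsym rtri]].
move=> mD omnd.
pose om' := fun t => om (Num.max t 0).
have -> : (fun u => om (rho u th)) = om' \o (fun u => rho u th).
  by apply/funext => u /=; rewrite /om' max_l.
apply: measurableT_comp; last exact: mrho.
apply: measurable_realfun.nondecreasing_measurable => // s t st.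
by apply: omnd; [rewrite le_max lexx orbT| rewrite ge_max !le_max st lexx !orbT].
Qed.
End Aux.

Lemma ompos (R : realType) (omega : R -> R) : is_modulus omega ->
  forall t, 0 < t -> 0 < omega t.
Proof.
case => om0 [omge [ommono [omsub [t0 t0ge omt0]]]] t tpos.
rewrite lt0r omge ?ltW // andbT; apply/eqP => omt.
have key : forall n : nat, omega (n%:R * t) <= 0.
  elim => [|n IH]; first by rewrite mul0r om0.
  have -> : n.+1%:R * t = n%:R * t + t by rewrite -nat1r mulrDl mul1r addrC.
  apply: (le_trans (omsub _ _ _ _)); [by rewrite mulr_ge0 // ltW| exact: ltW|].
  by rewrite omt addr0.
apply: omt0; apply/eqP; rewrite eq_le omge // andbT.
have lt1 := truncnS_gt (t0 / t).
rewrite ltr_pdivrMr // in lt1.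
apply: le_trans (key (Num.Def.trunc (t0 / t)).+1).
by apply: ommono => //; exact: ltW.
Qed.

Lemma maxlip (R : realType) (a b : R) :
  `|Num.max a 0 - Num.max b 0| <= `|a - b|.
Proof.
have h1 := ler_norm (a - b); have h2 := ler_norm (b - a); rewrite distrC in h2.
rewrite ler_norml; apply/andP.
by case: (lerP a 0) => ha; case: (lerP b 0) => hb; split; lra.
Qed.
Theorem corollary1 (R : realType) (d : measure_display) (X : measurableType d)
  (rho : X -> X -> R) (add : X -> X -> X) (theta : X)
  (mu : {measure set X -> \bar R}) (omega : R -> R)
  (* (X, rho) is a metric space *)
  (Hmetric : is_metric rho)
  (* mu is a Borel measure: the measurable sets are the Borel sets of rho *)
  (Hborel : (@measurable d X) = <<s rho_open rho >>)
  (* commutative monoid with neutral element theta *)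
  (Hmonoid : is_comm_monoid add theta)
  (* translation invariance of mu *)
  (Htransl_meas : forall x Q, measurable Q -> measurable (translate add x Q))
  (Htransl : forall x Q, measurable Q -> mu (translate add x Q) = mu Q)
  (Htransl_int : forall (g : X -> R), 
     (forall y r, 0 < r -> mu.-integrable (rball rho y r) (EFin \o g)) ->
     forall x h, 0 < h ->
       mu.-integrable (rball rho theta h) (fun u => (g (add x u))%:E) /\
       (\int[mu]_(u in rball rho theta h) (g (add x u))%:E =
        \int[mu]_(u in translate add x (rball rho theta h)) (g u)%:E)%E)
  (Hdist : forall x y, rho (add x y) x <= rho y theta)
  (Hball_pos : forall h, 0 < h -> (0 < mu (rball rho theta h))%E)
  (Hball_fin : forall h, 0 < h -> (mu (rball rho theta h) < +oo)%E)
  (Hball_nt : forall h, 0 < h -> rball rho theta h <> [set theta])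
  (Hcont_int : forall g : X -> R, rho_continuous rho g ->
     forall x r, 0 < r -> mu.-integrable (rball rho x r) (EFin \o g))
  (* omega is a modulus of continuity *)
  (Homega : is_modulus omega)
  (h : R) (hpos : 0 < h) :
  let muB := fine (mu (rball rho theta h)) in
  (forall f : X -> R, in_H rho omega f -> mu.-integrable setT (EFin \o f) ->
     (supnorm f <=
        Hnorm rho omega f * (muB^-1)%:E *
          \int[mu]_(u in rball rho theta h) (omega (rho u theta))%:E
        + L1norm mu f * (muB^-1)%:E)%E) /\
  (let fe := fun x => Num.max (omega h - omega (rho x theta)) 0 in
     in_H rho omega fe /\ mu.-integrable setT (EFin \o fe) /\
     supnorm fe =
       (Hnorm rho omega fe * (muB^-1)%:E *
          \int[mu]_(u in rball rho theta h) (omega (rho u theta))%:E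
        + L1norm mu fe * (muB^-1)%:E)%E).
Proof.
move=> muB.
have Hmetric' := Hmetric.
case: Hmetric => r0 [req [rsym rtri]].
have Homega' := Homega.
case: Homega => om0 [omge [ommono [omsub _]]].
have ompos' := @ompos _ _ Homega'.
have rr0 : forall x, rho x x = 0 by move=> x; exact/(proj2 (req x x)).
have rpos : forall x y, x <> y -> 0 < rho x y.
  by move=> x y xy; rewrite lt0r r0 andbT; apply/eqP => /req.
pose B := rball rho theta h.
have mB : measurable B := @mball _ _ _ _ Hmetric' Hborel theta h.
have thB : B theta by rewrite /B /rball /= rr0.
have [x0 [x0B x0th]] : exists x0, B x0 /\ x0 <> theta.
  apply: contrapT => hne; apply: (Hball_nt h hpos); apply/seteqP; split => [y By|y ->] //=.
  by apply: contrapT => yth; apply: hne; exists y.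
have muBE : mu B = muB%:E.
  by rewrite /muB fineK // ge0_fin_numE ?Hball_fin // measure_ge0.
have mpos : 0 < muB by rewrite -lte_fin -muBE Hball_pos.
have mB0 : muB != 0 by rewrite gt_eqF.
pose w := fun u => omega (rho u theta).
have mw : forall D, measurable D -> measurable_fun D w :=
  fun D mD => @mcomp_mono _ _ _ _ Hmetric' Hborel D theta omega mD ommono.
have mwE : forall D, measurable D -> measurable_fun D (fun u => (w u)%:E).
  by move=> D mD; apply/measurable_EFinP; exact: mw.
have w0 : forall u, 0 <= w u := fun u => omge _ (r0 _ _).
have wB : forall u, B u -> w u <= omega h.
  by move=> u Bu; rewrite /w rsym; apply: ommono => //; exact: ltW.
have Ile : (\int[mu]_(u in B) (w u)%:E <= (omega h * muB)%:E)%E.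
  rewrite EFinM -muBE -integral_cst //; apply: ge0_le_integral => //.
  - by move=> u _; rewrite lee_fin.
  - exact: mwE.
have Ige0 : (0 <= \int[mu]_(u in B) (w u)%:E)%E.
  by apply: integral_ge0 => u _; rewrite lee_fin.
pose Ir := fine (\int[mu]_(u in B) (w u)%:E).
have IE : (\int[mu]_(u in rball rho theta h) (omega (rho u theta))%:E = Ir%:E)%E.
  rewrite /Ir fineK // ge0_fin_numE //; exact: le_lt_trans Ile (ltry _).
have IE' : (\int[mu]_(u in B) (w u)%:E = Ir%:E)%E by exact: IE.
split.
  move=> f Hf If.
  have Hge0 : (0 <= Hnorm rho omega f)%E.
    apply: (@le_trans _ _ (`|f x0 - f theta| / omega (rho x0 theta))%:E).
      by rewrite lee_fin divr_ge0 // omge.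
    by apply: ereal_sup_ubound; exists x0, theta; split.
  pose Hr := fine (Hnorm rho omega f).
  have HE : Hnorm rho omega f = Hr%:E by rewrite /Hr fineK // ge0_fin_numE.
  have Hr0 : 0 <= Hr by rewrite -lee_fin -HE.
  have Hlip : forall x y, `|f x - f y| <= Hr * omega (rho x y).
    move=> x y; case: (pselect (x = y)) => [->|xy].
      by rewrite subrr normr0 rr0 om0 mulr0.
    rewrite -ler_pdivrMr ?ompos' ?rpos // -lee_fin -HE.
    by apply: ereal_sup_ubound; exists x, y; split.
  move/integrableP: (If) => [mfE ifin].
  have L1E : (L1norm mu f = \int[mu]_x `|(EFin \o f) x|)%E.
    by apply: eq_integral => x _; by [].
  pose L := fine (L1norm mu f).
  have LE : L1norm mu f = L%:E.
    rewrite /L fineK // ge0_fin_numE; first by rewrite L1E.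
    by apply: integral_ge0 => x _; rewrite lee_fin.
  rewrite HE LE IE -!EFinM -EFinD.
  apply: ge_ereal_sup => _ [x _ <-]; rewrite lee_fin.
  rewrite -(ler_pM2r mpos).
  have -> : (Hr * muB^-1 * Ir + L * muB^-1) * muB = Hr * Ir + L by field.
  rewrite -lee_fin EFinM EFinD -muBE -integral_cst //.
  have Hballint : forall y r, 0 < r ->
      mu.-integrable (rball rho y r) (EFin \o (fun y => `|f y|)).
    move=> y r _; apply: (integrableS measurableT (@mball _ _ _ _ Hmetric' Hborel y r)) => //.
    exact: integrable_norm.
  have [gi geq] := Htransl_int (fun y => `|f y|) Hballint x h hpos.
  move/integrableP: (gi) => [mg _].
  have step1 : (\int[mu]_(u in B) (cst (`|f x|)%:E) u <=
      \int[mu]_(u in B) ((`|f (add x u)|)%:E + (Hr * w u)%:E))%E.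
    apply: ge0_le_integral => //.
    - by move=> u _; rewrite lee_fin normr_ge0.
    - apply: emeasurable_funD => //; apply/measurable_EFinP.
      apply: measurable_realfun.measurable_funM => //; exact: mw.
    - move=> u Bu; rewrite -EFinD lee_fin.
      have E : f (add x u) - (f (add x u) - f x) = f x by ring.
      have T := ler_normB (f (add x u)) (f (add x u) - f x); rewrite E in T.
      apply: (le_trans T); rewrite lerD2l.
      apply: (le_trans (Hlip _ _)); apply: ler_wpM2l => //.
      by apply: ommono => //; exact: Hdist.
  apply: (le_trans step1).
  have mHw : measurable_fun B (fun u => (Hr * w u)%:E).
    by apply/measurable_EFinP; apply: measurable_realfun.measurable_funM => //; exact: mw.
  rewrite (@ge0_integralD _ _ _ mu B mB _ _ _ mg _ mHw); last 2 first.
  - by move=> u _; rewrite lee_fin normr_ge0.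
  - by move=> u _; rewrite lee_fin mulr_ge0.
  rewrite [X in (_ + X <= _)%E](eq_integral (fun u => Hr%:E * (w u)%:E)%E); last by move=> u _; rewrite EFinM.
  rewrite ge0_integralZl_EFin //; [|by move=> u _; rewrite lee_fin|exact: mwE].
  rewrite IE' addeC; apply: leeD; first by rewrite EFinM.
  rewrite geq /L -LE L1E.
  apply: ge0_subset_integral => //.
  - exact: Htransl_meas.
  - by apply/measurable_EFinP; apply: measurableT_comp => //; apply/measurable_EFinP.
move=> fe.
have fe0 : forall x, 0 <= fe x by move=> x; rewrite /fe le_max lexx orbT.
have fele : forall x, fe x <= omega h.
  move=> x; rewrite /fe ge_max gerBl; apply/andP; split; [exact: w0 | exact: omge (ltW hpos)].
have feth : fe theta = omega h by rewrite /fe rr0 om0 subr0 max_l // omge // ltW.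
have feout : forall x, ~ B x -> fe x = 0.
  move=> x nBx; rewrite /fe max_r // subr_le0; apply: ommono; first exact: ltW.
  by rewrite rsym leNgt; apply/negP.
have feB : forall x, B x -> fe x + w x = omega h.
  by move=> x Bx; rewrite /fe max_l ?subr_ge0 ?wB // subrK.
have wlip : forall x y, w y <= omega (rho x y) + w x.
  move=> x y; rewrite /w; apply: (le_trans _ (omsub _ _ (r0 _ _) (r0 _ _))).
  by apply: ommono => //; rewrite (rsym x y); exact: rtri.
have lip : forall x y, `|fe x - fe y| <= omega (rho x y).
  move=> x y; rewrite /fe; apply: (le_trans (maxlip _ _ _)).
  have h1 := wlip x y; have h2 := wlip y x; rewrite (rsym y x) /w in h2; rewrite /w in h1.
  rewrite ler_norml; apply/andP; split; lra.
have Hn1 : Hnorm rho omega fe = 1%:E.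
  apply/le_anti/andP; split.
    apply: ge_ereal_sup => _ [x [y [xy ->]]].
    by rewrite lee_fin ler_pdivrMr ?ompos' ?rpos // mul1r.
  apply: (@le_trans _ _ (`|fe x0 - fe theta| / omega (rho x0 theta))%:E); last first.
    by apply: ereal_sup_ubound; exists x0, theta; split.
  rewrite feth /fe max_l ?subr_ge0 ?wB //.
  have -> : omega h - omega (rho x0 theta) - omega h = - omega (rho x0 theta) by ring.
  by rewrite normrN ger0_norm ?omge // divff // gt_eqF // ompos' // rpos.
have mfe : measurable_fun setT fe.
  apply: measurable_realfun.measurable_maxr; last exact: measurable_cst.
  apply: measurable_realfun.measurable_funB; [exact: measurable_cst | exact: mw].
have L1B : (L1norm mu fe = \int[mu]_(x in B) (fe x)%:E)%E.
  rewrite /L1norm [RHS]integral_mkcond; apply: eq_integral => x _.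
  rewrite /patch; case: ifPn => [|]; rewrite ?notin_setE ?in_setE => Bx.
    by rewrite ger0_norm.
  by rewrite feout // normr0.
have Le : (\int[mu]_(x in B) (fe x)%:E + \int[mu]_(u in B) (w u)%:E =
    (omega h * muB)%:E)%E.
  rewrite -ge0_integralD //; [|by move=> u _; rewrite lee_fin
    |by apply/measurable_EFinP; apply: (measurable_funS measurableT) => //
    |by move=> u _; rewrite lee_fin|exact: mwE].
  rewrite EFinM -muBE -integral_cst //; apply: eq_integral => x.
  by rewrite in_setE => Bx; rewrite -EFinD feB.
have Lfin : (\int[mu]_(x in B) (fe x)%:E = (omega h * muB - Ir)%:E)%E.
  move: Le; rewrite IE'.
  case: (\int[mu]_(x in B) (fe x)%:E)%E => [r| |] //= [<-].
  by congr EFin; ring.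
split; first by rewrite /in_H Hn1 ltry.
split.
  apply/integrableP; split; first exact/measurable_EFinP.
  have -> : (\int[mu]_x `|(EFin \o fe) x| = L1norm mu fe)%E.
    by apply: eq_integral => x _; by [].
  by rewrite L1B Lfin ltry.
rewrite Hn1 IE L1B Lfin -!EFinM -EFinD.
have -> : 1 * muB^-1 * Ir + (omega h * muB - Ir) * muB^-1 = omega h by field.
apply/le_anti/andP; split.
  apply: ge_ereal_sup => _ [x _ <-]; rewrite lee_fin ger0_norm //.
apply: ereal_sup_ubound; exists theta => //.
by rewrite feth ger0_norm // omge // ltW.
Qed.
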